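(* Let $N \geq 1$ be an integer and let $\pi : \{0,1,\dots,N-1\} \to \{0,1,\dots,N-1\}$ be any function. Then $\pi$ is a Hamiltonian cycle, i.e. $\pi$ is a permutation of $\{0,1,\dots,N-1\}$ consisting of a single cycle of length $N$, if and only if both of the following hold: (1) $\pi^j(0) \neq 0$ for every integer $j$ with $1 \leq j \leq N-1$ and $j \mid N$; and (2) $\pi^N(0) = 0$.
   Context: $\pi^j$ denotes the $j$-fold composition of $\pi$ with itself, and $j \mid N$ means $j$ divides $N$. In the paper, $\pi$ encodes a candidate traveling-salesman tour on $N$ cities: $\pi(i)$ is the city visited immediately after city $i$; the tour is a legal Hamiltonian cycle exactly when $\pi$ is a cyclic permutation of length $N$. *)

(* Defs.v *)
From mathcomp Require Import all_boot.
Set Implicit Arguments. Unset Strict Implicit. Unset Printing Implicit Defensive.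

(* A function pi on the N cities {0,...,N-1} (the ordinal type 'I_N) is a
   Hamiltonian cycle when it is a permutation (injective on a finite type)
   consisting of a single cycle of length N, i.e. the cycle of pi through
   every city x has exactly N elements ([order pi x] from fingraph is the
   size of the pi-orbit of x). *)
Definition hamiltonian_cycle (N : nat) (pi : 'I_N -> 'I_N) : Prop :=
  injective pi /\ forall x : 'I_N, order pi x = N.

(* Main.v *)
Require Import Defs.
From mathcomp Require Import all_boot.

Lemma iter_mul (T : Type) (f : T -> T) x m q :
  iter m f x = x -> iter (m * q) f x = x.
Proof.
move=> H; elim: q => [|q IH]; first by rewrite muln0.
by rewrite mulnS iterD IH H.
Qed.

Lemma period_div (T : Type) (f : T -> T) x N :
  iter N f x = x -> forall m, 0 < m -> iter m f x = x ->
  exists d, [/\ 0 < d, d %| N, d <= m & iter d f x = x].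
Proof.
move=> HN m; elim/ltn_ind: m => m IH m0 Hm.
case: (boolP (m %| N)) => dv; first by exists m.
have r0 : 0 < N %% m by move: dv; rewrite /dvdn lt0n.
have rm : N %% m < m by rewrite ltn_mod.
have Hr : iter (N %% m) f x = x.
  by rewrite -[in LHS](@iter_mul _ f x m (N %/ m) Hm) -iterD addnC mulnC -divn_eq.
have [d [d0 dd dr Hd]] := IH _ rm r0 Hr.
by exists d; split => //; apply: leq_trans (ltnW rm).
Qed.

Theorem theorem2 (N : nat) (hN : 0 < N) (pi : 'I_N -> 'I_N) :
  hamiltonian_cycle pi <->
  ((forall j : nat, 1 <= j <= N - 1 -> j %| N ->
      iter j pi (Ordinal hN) <> Ordinal hN) /\
   iter N pi (Ordinal hN) = Ordinal hN).
Proof.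
set x0 := Ordinal hN.
split.
  move=> [inj ord]; split; last by have := iter_order inj x0; rewrite ord.
  move=> j /andP[j1 jN] _ Hj.
  have jlt : j < order pi x0 by rewrite ord; apply: leq_ltn_trans jN _; rewrite subn1 prednK.
  have := findex_iter jlt; rewrite Hj findex0 => j0.
  by move: j1; rewrite -j0.
move=> [Hdiv HN].
set p := traject pi x0 N.
have Up : uniq p.
  apply/negPn/negP => /(uniqPn x0) [i [k [ik kN]]].
  rewrite size_traject in kN.
  have iN : i < N := ltn_trans ik kN.
  rewrite !nth_traject // => Hik.
  have Hm : iter (N - k + i) pi x0 = x0.
    by rewrite iterD Hik -iterD subnK // ltnW.
  have m0 : 0 < N - k + i by rewrite addn_gt0 subn_gt0 kN.
  have [d [d0 dd dm Hd]] := @period_div _ pi x0 N HN _ m0 Hm.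
  apply: (Hdiv d) => //; rewrite d0 /=.
  apply: leq_trans dm _; rewrite subn1 -ltnS prednK //.
  rewrite -{2}(subnK (ltnW kN)) ltn_add2l //.
have allp : forall y, y \in p.
  have : p =i predT.
    apply/subset_cardP; last exact/subsetP.
    by rewrite (card_uniqP Up) size_traject card_ord.
  by move=> e y; rewrite e.
have iterE : forall y, iter (index y p) pi x0 = y.
  move=> y; have iy : index y p < N by have := index_mem y p; rewrite size_traject allp.
  by rewrite -(nth_traject pi iy) nth_index.
have conn : forall y, fconnect pi x0 y by move=> y; rewrite -(iterE y) fconnect_iter.
pose g y := iter (index y p + N).-1 pi x0.
have gK : cancel g pi.
  move=> y; rewrite /g -iterS prednK; last by rewrite addn_gt0 hN orbT.
  by rewrite iterD HN iterE.
have inj : injective pi.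
  have [h gh hg] := injF_bij (can_inj gK).
  have E : pi =1 h by move=> a; rewrite -{1}(hg a) gK.
  by move=> a b; rewrite !E; apply: (can_inj hg).
split => // x.
rewrite /order -[RHS](card_ord N); apply: eq_card => y.
rewrite !inE; apply: (connect_trans _ (conn y)).
by rewrite fconnect_sym.
Qed.
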